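(* For $s\in[0,1]$ let $|\alpha^n_s\rangle$ be the (unique) ground state of $H^n_s=(1-s)\sum_{k=1}^n|-\rangle\langle-|_k+s\sum_{k=1}^n|1\rangle\langle1|_k$; it has the form $(\cos\varphi_s|0\rangle+\sin\varphi_s|1\rangle)^{\otimes n}=(\cos\xi_s|+\rangle+\sin\xi_s|-\rangle)^{\otimes n}$ with $\varphi_s\in[0,\pi/4]$, $\xi_s=\pi/4-\varphi_s$. For every real $\vartheta\ge n/2$ and every $s\in[0,1]$, $$\sum_{j:\,h(j)\ge\vartheta}\Big(|\langle j|\alpha^n_s\rangle|^2+|\langle j_+|\alpha^n_s\rangle|^2\Big)\le2\exp\!\Big(-\frac{2(\vartheta-n/2)^2}{3n}\Big).$$
   Context: On $n$ qubits with computational basis $|j\rangle$, $j\in\{0,\dots,2^n-1\}$: $h(j)$ is the Hamming weight of $j$ and $|j_+\rangle=\mathsf H^{\otimes n}|j\rangle$ with $\mathsf H$ the Hadamard gate; subscript $k$ means the operator acts on qubit $k$. *)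

(* Defs.v *)
From Stdlib Require Import Reals List Arith Bool.
Import ListNotations.
Open Scope R_scope.

Definition rsum (N : nat) (f : nat -> R) : R :=
  fold_right Rplus 0 (map f (seq 0 N)).
Definition rprod (N : nat) (f : nat -> R) : R :=
  fold_right Rmult 1 (map f (seq 0 N)).

(* bit k of the basis label j: the computational-basis value of qubit k *)
Definition bit (j k : nat) : bool := Nat.testbit j k.

Definition hw (n j : nat) : nat :=
  length (filter (fun k => bit j k) (seq 0 n)).

(* matrix entry <i| A_k |j> of a single-qubit operator A acting on qubit k
   (identity on the other n-1 qubits); A a b = <a|A|b> *)
Definition op_on (n k : nat) (A : bool -> bool -> R) (i j : nat) : R :=
  A (bit i k) (bit j k) *
  rprod n (fun l => if Nat.eqb l k then 1
                    else if Bool.eqb (bit i l) (bit j l) then 1 else 0).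

(* |-><-| = 1/2 [[1,-1],[-1,1]] and |1><1| *)
Definition Pminus (a b : bool) : R := if Bool.eqb a b then 1/2 else -(1/2).
Definition P1 (a b : bool) : R := if a && b then 1 else 0.

Definition Ham (n : nat) (s : R) (i j : nat) : R :=
  (1 - s) * rsum n (fun k => op_on n k Pminus i j)
  + s * rsum n (fun k => op_on n k P1 i j).

(* a complex state vector on n qubits, as real part re and imaginary part im,
   components indexed by j in 0..2^n-1 *)
Definition norm2 (n : nat) (re im : nat -> R) : R :=
  rsum (2 ^ n) (fun j => re j ^ 2 + im j ^ 2).

(* energy <v|H|v> for v = re + i im and H real symmetric
   (the imaginary part of <v|H|v> vanishes) *)
Definition energy (n : nat) (H : nat -> nat -> R) (re im : nat -> R) : R :=
  rsum (2 ^ n) (fun i => rsum (2 ^ n) (fun j =>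
      H i j * (re i * re j + im i * im j))).

Definition IsGroundState (n : nat) (H : nat -> nat -> R) (re im : nat -> R) : Prop :=
  norm2 n re im = 1 /\
  forall re' im' : nat -> R, norm2 n re' im' = 1 ->
    energy n H re im <= energy n H re' im'.

(* matrix entry <j| H^{(x)n} |i> = prod_k (-1)^{j_k i_k} / sqrt 2 *)
Definition hadn (n j i : nat) : R :=
  rprod n (fun k => (if bit j k && bit i k then -1 else 1) / sqrt 2).

Definition amp2_comp (re im : nat -> R) (j : nat) : R := re j ^ 2 + im j ^ 2.

(* |<j_+|v>|^2, with |j_+> = H^{(x)n}|j> (real), so <j_+|v> = sum_i H_{ji} v_i *)
Definition amp2_had (n : nat) (re im : nat -> R) (j : nat) : R :=
  (rsum (2 ^ n) (fun i => hadn n j i * re i)) ^ 2 +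
  (rsum (2 ^ n) (fun i => hadn n j i * im i)) ^ 2.

(* Main.v *)
Require Import Defs.
From Stdlib Require Import Reals List Arith Bool Lia Lra.
Import ListNotations.
Open Scope R_scope.

Lemma bit_high (j n m : nat) : (j < 2 ^ n)%nat -> (n <= m)%nat -> bit j m = false.
Proof.
  intros Hj Hm. unfold bit. destruct (Nat.eq_dec j 0) as [->|Hj0].
  - apply Nat.bits_0.
  - apply Nat.bits_above_log2. apply Nat.log2_lt_pow2 in Hj; lia.
Qed.

Lemma bit_add_pow (i m l : nat) : bit i m = false ->
  bit (i + 2 ^ m) l = ((l =? m)%nat || bit i l).
Proof.
  unfold bit; intros H.
  assert (Hl : Nat.land i (2 ^ m) = 0%nat).
  { apply Nat.bits_inj_0. intro k. rewrite Nat.land_spec, Nat.pow2_bits_eqb.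
    destruct (Nat.eqb_spec m k); subst; [rewrite H|]; auto with bool. }
  rewrite Nat.add_nocarry_lxor by exact Hl.
  rewrite Nat.lxor_spec, Nat.pow2_bits_eqb.
  destruct (Nat.eqb_spec l m); destruct (Nat.eqb_spec m l); subst; try lia.
  - rewrite H; reflexivity.
  - simpl. apply xorb_false_r.
Qed.

Lemma bits_eq (i j n : nat) : (i < 2 ^ n)%nat -> (j < 2 ^ n)%nat ->
  (forall l, (l < n)%nat -> bit i l = bit j l) -> i = j.
Proof.
  intros Hi Hj H. apply Nat.bits_inj. intro l.
  destruct (Nat.lt_ge_cases l n).
  - apply H; auto.
  - fold (bit i l) (bit j l). rewrite (bit_high i n l), (bit_high j n l); auto.
Qed.

Lemma hw_S n j : hw (S n) j = (hw n j + (if bit j n then 1 else 0))%nat.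
Proof.
  unfold hw. rewrite seq_S, filter_app, length_app. simpl.
  destruct (bit j n); reflexivity.
Qed.

Lemma hw_le n j : (hw n j <= n)%nat.
Proof. induction n; [unfold hw; simpl; lia|]. rewrite hw_S. destruct (bit j n); lia. Qed.

Lemma hw_add_gen (n i m : nat) : bit i m = false ->
  hw n (i + 2 ^ m) = (hw n i + (if (m <? n)%nat then 1 else 0))%nat.
Proof.
  intros Hb. induction n.
  - reflexivity.
  - rewrite !hw_S, IHn, bit_add_pow by exact Hb.
    destruct (Nat.eqb_spec n m).
    + subst. rewrite Hb. simpl. rewrite Nat.ltb_irrefl, (proj2 (Nat.ltb_lt m (S m))) by lia. lia.
    + simpl. destruct (Nat.ltb_spec m n), (Nat.ltb_spec m (S n)); try lia.
Qed.

Lemma hw_add (n i m : nat) : bit i m = false -> (m < n)%nat ->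
  hw n (i + 2 ^ m) = S (hw n i).
Proof.
  intros Hb Hm. rewrite hw_add_gen by exact Hb.
  rewrite (proj2 (Nat.ltb_lt m n)) by exact Hm. lia.
Qed.

Lemma fr_plus (l : list R) a : fold_right Rplus a l = fold_right Rplus 0 l + a.
Proof. induction l; simpl; [lra|rewrite IHl; lra]. Qed.
Lemma fr_mult (l : list R) a : fold_right Rmult a l = fold_right Rmult 1 l * a.
Proof. induction l; simpl; [lra|rewrite IHl; ring]. Qed.

Lemma rsum_S N f : rsum (S N) f = rsum N f + f N.
Proof. unfold rsum. rewrite seq_S, map_app, fold_right_app. simpl.
  rewrite fr_plus. lra. Qed.
Lemma rprod_S N f : rprod (S N) f = rprod N f * f N.
Proof. unfold rprod. rewrite seq_S, map_app, fold_right_app. simpl.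
  rewrite fr_mult. ring. Qed.
Lemma rsum_0 f : rsum 0 f = 0. Proof. reflexivity. Qed.
Lemma rprod_0 f : rprod 0 f = 1. Proof. reflexivity. Qed.

Lemma rsum_ext N f g : (forall i, (i < N)%nat -> f i = g i) -> rsum N f = rsum N g.
Proof. induction N; intros H; [reflexivity|]. rewrite !rsum_S, IHN, H; auto. Qed.
Lemma rprod_ext N f g : (forall i, (i < N)%nat -> f i = g i) -> rprod N f = rprod N g.
Proof. induction N; intros H; [reflexivity|]. rewrite !rprod_S, IHN, H; auto. Qed.

Lemma rsum_plus N f g : rsum N (fun i => f i + g i) = rsum N f + rsum N g.
Proof. induction N; [unfold rsum, rprod; simpl; lra|]. rewrite !rsum_S, IHN. lra. Qed.
Lemma rsum_scal N c f : rsum N (fun i => c * f i) = c * rsum N f.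
Proof. induction N; [unfold rsum, rprod; simpl; lra|]. rewrite !rsum_S, IHN. lra. Qed.
Lemma rsum_zero N : rsum N (fun _ => 0) = 0.
Proof. induction N; [reflexivity|]. rewrite rsum_S, IHN. lra. Qed.
Lemma rsum_le N f g : (forall i, (i < N)%nat -> f i <= g i) -> rsum N f <= rsum N g.
Proof. induction N; intros H; [unfold rsum, rprod; simpl; lra|]. rewrite !rsum_S.
  assert (f N <= g N) by auto. assert (rsum N f <= rsum N g) by auto. lra. Qed.
Lemma rsum_nonneg N f : (forall i, (i < N)%nat -> 0 <= f i) -> 0 <= rsum N f.
Proof. intros H. rewrite <- (rsum_zero N). apply rsum_le. auto. Qed.
Lemma rsum_term_le N f i : (forall i, (i < N)%nat -> 0 <= f i) -> (i < N)%nat ->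
  f i <= rsum N f.
Proof. induction N; intros H Hi; [lia|]. rewrite rsum_S.
  assert (0 <= rsum N f) by (apply rsum_nonneg; auto).
  assert (0 <= f N) by auto.
  destruct (Nat.eq_dec i N); [subst; lra|].
  assert (f i <= rsum N f) by (apply IHN; auto; lia). lra. Qed.
Lemma rsum_add a b f : rsum (a + b) f = rsum a f + rsum b (fun j => f (a + j)%nat).
Proof. induction b; [rewrite Nat.add_0_r, rsum_0; lra|].
  rewrite Nat.add_succ_r, !rsum_S, IHb. lra. Qed.
Lemma rsum_swap N M (f : nat -> nat -> R) :
  rsum N (fun i => rsum M (fun k => f i k)) = rsum M (fun k => rsum N (fun i => f i k)).
Proof. induction N; [rewrite rsum_0, rsum_zero; reflexivity|].
  rewrite rsum_S, IHN, <- rsum_plus. apply rsum_ext; intros. rewrite rsum_S; reflexivity. Qed.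
Lemma rsum_delta N j g : (j < N)%nat ->
  rsum N (fun i => if (i =? j)%nat then g i else 0) = g j.
Proof. induction N; intros H; [lia|]. rewrite rsum_S.
  destruct (Nat.eqb_spec N j).
  - subst. rewrite (rsum_ext _ _ (fun _ => 0)), rsum_zero; [lra|].
    intros i Hi. destruct (Nat.eqb_spec i j); [lia|reflexivity].
  - rewrite IHN by lia. lra. Qed.

Lemma rprod_mult N f g : rprod N (fun i => f i * g i) = rprod N f * rprod N g.
Proof. induction N; [unfold rsum, rprod; simpl; lra|]. rewrite !rprod_S, IHN. ring. Qed.
Lemma rprod_const N c : rprod N (fun _ => c) = c ^ N.
Proof. induction N; [reflexivity|]. rewrite rprod_S, IHN. simpl. ring. Qed.
Lemma rprod_nonneg N f : (forall i, (i < N)%nat -> 0 <= f i) -> 0 <= rprod N f.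
Proof. induction N; intros H; [unfold rsum, rprod; simpl; lra|]. rewrite rprod_S.
  apply Rmult_le_pos; auto. Qed.
Lemma rprod_zero N f i : (i < N)%nat -> f i = 0 -> rprod N f = 0.
Proof. induction N; intros Hi Hf; [lia|]. rewrite rprod_S.
  destruct (Nat.eq_dec i N); [subst; rewrite Hf; ring|].
  rewrite IHN by (auto; lia). ring. Qed.
Lemma rprod_sq N f : rprod N f ^ 2 = rprod N (fun i => f i ^ 2).
Proof. induction N; [unfold rsum, rprod; simpl; lra|]. rewrite !rprod_S, <- IHN. ring. Qed.
Lemma rprod_pow_hw n j c :
  c ^ (hw n j) = rprod n (fun k => if bit j k then c else 1).
Proof. induction n; [unfold hw; simpl; reflexivity|].
  rewrite hw_S, rprod_S, <- IHn, pow_add. destruct (bit j n); simpl; ring. Qed.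

Lemma split_pow m f : rsum (2 ^ S m) f =
  rsum (2 ^ m) f + rsum (2 ^ m) (fun j => f (j + 2 ^ m)%nat).
Proof.
  replace (2 ^ S m)%nat with (2 ^ m + 2 ^ m)%nat by (simpl; lia).
  rewrite rsum_add. f_equal. apply rsum_ext; intros. f_equal; lia.
Qed.

Lemma bit_lt j m : (j < 2 ^ m)%nat -> bit j m = false.
Proof. intros; apply (bit_high j m m); auto. Qed.

Lemma bit_shift j m l : (j < 2 ^ m)%nat -> bit (j + 2 ^ m) l = ((l =? m)%nat || bit j l).
Proof. intros; apply bit_add_pow, bit_lt; auto. Qed.

Lemma pair_sum n k f : (k < n)%nat ->
  rsum (2 ^ n) f = rsum (2 ^ n) (fun j => if bit j k then 0 else f j + f (j + 2 ^ k)%nat).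
Proof.
  revert f; induction n; intros f Hk; [lia|].
  rewrite !split_pow.
  destruct (Nat.eq_dec k n).
  - subst. rewrite (rsum_ext (2^n) (fun j => if bit j n then 0 else _) (fun j => f j + f (j + 2^n)%nat)).
    2:{ intros; rewrite bit_lt; auto. }
    rewrite (rsum_ext (2^n) (fun j => if bit (j + 2^n) n then 0 else _) (fun j => 0)).
    2:{ intros; rewrite bit_shift, Nat.eqb_refl; auto. }
    rewrite rsum_zero, rsum_plus. lra.
  - rewrite (IHn f), (IHn (fun j => f (j + 2^n)%nat)) by lia. f_equal.
    apply rsum_ext; intros j Hj. rewrite bit_shift by auto.
    destruct (Nat.eqb_spec k n); [lia|]. simpl.
    destruct (bit j k); [reflexivity|]. f_equal. f_equal. lia.
Qed.

Lemma prod_sum n (g : nat -> bool -> R) :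
  rsum (2 ^ n) (fun j => rprod n (fun k => g k (bit j k))) =
  rprod n (fun k => g k false + g k true).
Proof.
  induction n; [unfold rsum, rprod; simpl; lra|].
  rewrite split_pow, rprod_S, <- IHn.
  rewrite (rsum_ext (2^n) _ (fun j => rprod n (fun k => g k (bit j k)) * g n false)).
  2:{ intros. rewrite rprod_S, bit_lt; auto. }
  rewrite (rsum_ext (2^n) (fun j => rprod (S n) _) (fun j => rprod n (fun k => g k (bit j k)) * g n true)).
  2:{ intros. rewrite rprod_S, bit_shift, Nat.eqb_refl by auto. simpl. f_equal.
      apply rprod_ext; intros k Hk. rewrite bit_shift by auto.
      destruct (Nat.eqb_spec k n); [lia|reflexivity]. }
  rewrite (rsum_ext (2^n) (fun j => _ * g n false) (fun j => g n false * rprod n (fun k => g k (bit j k)))) by (intros; ring).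
  rewrite (rsum_ext (2^n) (fun j => _ * g n true) (fun j => g n true * rprod n (fun k => g k (bit j k)))) by (intros; ring).
  rewrite !rsum_scal. ring.
Qed.

Definition ind n k a b := rprod n (fun l => if (l =? k)%nat then 1
   else if Bool.eqb (bit a l) (bit b l) then 1 else 0).

Lemma op_on_ind n k A a b : op_on n k A a b = A (bit a k) (bit b k) * ind n k a b.
Proof. reflexivity. Qed.

Lemma ind_shift_l n k i b : bit i k = false -> ind n k (i + 2 ^ k) b = ind n k i b.
Proof. intros H. apply rprod_ext; intros l _. rewrite bit_add_pow by exact H.
  destruct (Nat.eqb_spec l k); reflexivity. Qed.
Lemma ind_shift_r n k i b : bit i k = false -> ind n k b (i + 2 ^ k) = ind n k b i.
Proof. intros H. apply rprod_ext; intros l _. rewrite bit_add_pow by exact H.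
  destruct (Nat.eqb_spec l k); reflexivity. Qed.

From Stdlib Require Import Classical.

Lemma ind_delta n k i j : (i < 2 ^ n)%nat -> (j < 2 ^ n)%nat ->
  bit i k = false -> bit j k = false ->
  ind n k i j = if (j =? i)%nat then 1 else 0.
Proof.
  intros Hi Hj Bi Bj. destruct (Nat.eqb_spec j i).
  - subst. unfold ind. rewrite (rprod_ext _ _ (fun _ => 1)), rprod_const, pow1; auto.
    intros l _. rewrite eqb_reflx. destruct (l =? k)%nat; reflexivity.
  - destruct (classic (exists l, (l < n)%nat /\ bit i l <> bit j l)) as [[l [Hl Hne]]|Hno].
    + apply (rprod_zero _ _ l Hl). destruct (Nat.eqb_spec l k).
      * subst. congruence.
      * destruct (bit i l), (bit j l); simpl; congruence.
    + exfalso. apply n0. symmetry. apply (bits_eq i j n Hi Hj).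
      intros l Hl. destruct (Bool.bool_dec (bit i l) (bit j l)); auto.
      exfalso; apply Hno; eauto.
Qed.

Lemma inner_sum n k (A : bool -> bool -> R) a i y x : (k < n)%nat -> (i < 2 ^ n)%nat ->
  bit i k = false -> (forall j, ind n k a j = ind n k i j) ->
  rsum (2 ^ n) (fun j => op_on n k A a j * (y * x j)) =
  A (bit a k) false * (y * x i) + A (bit a k) true * (y * x (i + 2 ^ k)%nat).
Proof.
  intros Hk Hi Bi Hind. rewrite (pair_sum n k) by exact Hk.
  rewrite (rsum_ext _ _ (fun j => if (j =? i)%nat then
     A (bit a k) false * (y * x j) + A (bit a k) true * (y * x (j + 2 ^ k)%nat) else 0)).
  { apply rsum_delta; auto. }
  intros j Hj. destruct (bit j k) eqn:Bj.
  - destruct (Nat.eqb_spec j i); [subst; congruence|reflexivity].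
  - rewrite !op_on_ind, !Hind, ind_shift_r by exact Bj.
    rewrite bit_add_pow by exact Bj. rewrite Nat.eqb_refl, Bj. simpl.
    rewrite (ind_delta n k i j) by auto.
    destruct (Nat.eqb_spec j i); [subst; ring|ring].
Qed.

Definition hq (s : R) (a b : bool) : R := (1 - s) * Defs.Pminus a b + s * Defs.P1 a b.

Lemma Ham_eq n s i j : Ham n s i j = rsum n (fun k => op_on n k (hq s) i j).
Proof. unfold Ham. rewrite <- !rsum_scal, <- rsum_plus. apply rsum_ext; intros.
  unfold op_on, hq. ring. Qed.

Definition E1 n s (x : nat -> R) :=
  rsum (2 ^ n) (fun i => rsum (2 ^ n) (fun j => Ham n s i j * (x i * x j))).

Lemma energy_split n s re im : energy n (Ham n s) re im = E1 n s re + E1 n s im.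
Proof. unfold energy, E1. rewrite <- rsum_plus. apply rsum_ext; intros.
  rewrite <- rsum_plus. apply rsum_ext; intros. ring. Qed.

Definition qterm s (u w : R) :=
  hq s false false * (u * u) + hq s false true * (u * w) +
  hq s true false * (w * u) + hq s true true * (w * w).

Lemma E1_formula n s x : E1 n s x =
  rsum n (fun k => rsum (2 ^ n) (fun i => if bit i k then 0 else
     qterm s (x i) (x (i + 2 ^ k)%nat))).
Proof.
  unfold E1.
  rewrite (rsum_ext _ _ (fun i => rsum (2^n) (fun j => rsum n (fun k =>
      op_on n k (hq s) i j * (x i * x j))))).
  2:{ intros i _. apply rsum_ext; intros j _. rewrite Ham_eq.
      rewrite Rmult_comm, <- rsum_scal. apply rsum_ext; intros; ring. }
  rewrite (rsum_ext _ _ (fun i => rsum n (fun k => rsum (2^n) (fun j =>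
      op_on n k (hq s) i j * (x i * x j))))).
  2:{ intros; apply rsum_swap. }
  rewrite rsum_swap. apply rsum_ext; intros k Hk.
  rewrite (pair_sum n k) by exact Hk. apply rsum_ext; intros i Hi.
  destruct (bit i k) eqn:Bi; [reflexivity|].
  rewrite (inner_sum n k _ i i) by (auto; intros; reflexivity).
  rewrite (inner_sum n k _ (i + 2^k)%nat i) by (auto; intros; apply ind_shift_l; auto).
  rewrite bit_add_pow, Nat.eqb_refl, Bi by exact Bi. simpl.
  unfold qterm. ring.
Qed.

Definition Rt s := sqrt (s ^ 2 + (1 - s) ^ 2).
Definition lam s := (1 - Rt s) / 2.
Definition kap s := (s + Rt s) / 2.
Definition rr s := ((1 - s) / 2) / kap s.

Lemma Rt_sq s : Rt s ^ 2 = s ^ 2 + (1 - s) ^ 2.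
Proof. unfold Rt. rewrite pow2_sqrt; [reflexivity|nra]. Qed.
Lemma Rt_pos s : 0 < Rt s.
Proof. unfold Rt. apply sqrt_lt_R0. nra. Qed.
Lemma kap_pos s : 0 <= s -> 0 < kap s.
Proof. intros. unfold kap. pose proof (Rt_pos s). lra. Qed.

Lemma rr_bounds s : 0 <= s <= 1 -> 0 <= rr s <= 1.
Proof.
  intros Hs. pose proof (kap_pos s (proj1 Hs)) as Hk. pose proof (Rt_sq s). pose proof (Rt_pos s).
  unfold rr. split.
  - apply Rmult_le_pos; [lra|]. left; apply Rinv_0_lt_compat; lra.
  - apply Rmult_le_reg_r with (kap s); auto. unfold Rdiv. rewrite Rmult_assoc, Rinv_l by lra.
    unfold kap. nra.
Qed.

Lemma qterm_decomp s u w : 0 <= s -> qterm s u w = lam s * (u * u + w * w) + kap s * (w - rr s * u) ^ 2.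
Proof.
  intros Hs. pose proof (kap_pos s Hs) as Hk. pose proof (Rt_sq s) as HR.
  unfold qterm, hq, Defs.Pminus, Defs.P1, rr, lam. simpl.
  unfold kap in *. field_simplify; [|lra].
  replace (u ^ 2 * Rt s ^ 2) with (u^2 * (s^2 + (1-s)^2)) by (rewrite HR; ring). field. lra.
Qed.

Definition Sk n s k (x : nat -> R) := rsum (2 ^ n) (fun i => if bit i k then 0
   else (x (i + 2 ^ k)%nat - rr s * x i) ^ 2).
Definition nrm n (x : nat -> R) := rsum (2 ^ n) (fun i => x i ^ 2).

Lemma rsum_const N c : rsum N (fun _ => c) = INR N * c.
Proof. induction N; [unfold rsum; simpl; ring|]. rewrite rsum_S, IHN, S_INR. ring. Qed.

Lemma Sk_nonneg n s k x : 0 <= Sk n s k x.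
Proof. apply rsum_nonneg; intros. destruct (bit i k); [lra|apply pow2_ge_0]. Qed.

Lemma E1_decomp n s x : 0 <= s ->
  E1 n s x = INR n * lam s * nrm n x + kap s * rsum n (fun k => Sk n s k x).
Proof.
  intros Hs. rewrite E1_formula.
  rewrite (rsum_ext _ _ (fun k => lam s * nrm n x + kap s * Sk n s k x)).
  { rewrite rsum_plus, rsum_scal, rsum_const, rsum_scal. ring. }
  intros k Hk. unfold nrm, Sk. rewrite (pair_sum n k (fun i => x i ^ 2)) by exact Hk.
  rewrite <- !rsum_scal, <- rsum_plus. apply rsum_ext; intros i _.
  destruct (bit i k); [ring|]. rewrite qterm_decomp by exact Hs. ring.
Qed.

Lemma hw_zero n : hw n 0 = 0%nat.
Proof. induction n; [reflexivity|]. rewrite hw_S, IHn. unfold bit. rewrite Nat.bits_0. reflexivity. Qed.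

Lemma shape_from n r x :
  (forall k i, (k < n)%nat -> (i < 2 ^ n)%nat -> bit i k = false -> x (i + 2 ^ k)%nat = r * x i) ->
  forall j, (j < 2 ^ n)%nat -> x j = r ^ hw n j * x 0%nat.
Proof.
  intros H. assert (forall m, (m <= n)%nat -> forall j, (j < 2 ^ m)%nat -> x j = r ^ hw n j * x 0%nat).
  { induction m; intros Hm j Hj.
    - simpl in Hj. assert (j = 0%nat) by lia. subst. rewrite hw_zero. simpl. ring.
    - destruct (Nat.lt_ge_cases j (2 ^ m)).
      + apply IHm; auto; lia.
      + assert (Hpm : (2 ^ m <= 2 ^ n)%nat) by (apply Nat.pow_le_mono_r; lia).
        replace j with ((j - 2^m) + 2^m)%nat by lia.
        assert (Hi : (j - 2^m < 2^m)%nat) by (simpl in Hj; lia).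
        rewrite H by (auto using bit_lt; lia).
        rewrite hw_add by (auto using bit_lt; lia).
        rewrite IHm by (auto; lia). simpl. ring. }
  intros j Hj. apply (H0 n); auto.
Qed.

Lemma Sk_zero n s k x : Sk n s k x <= 0 ->
  forall i, (i < 2 ^ n)%nat -> bit i k = false -> x (i + 2 ^ k)%nat = rr s * x i.
Proof.
  intros H i Hi Bi. unfold Sk in H.
  pose proof (rsum_term_le (2^n) (fun i => if bit i k then 0 else (x (i + 2 ^ k)%nat - rr s * x i) ^ 2) i) as T.
  simpl in T. rewrite Bi in T.
  assert ((x (i + 2 ^ k)%nat - rr s * x i) ^ 2 <= 0).
  { eapply Rle_trans; [apply T|exact H]; auto.
    intros; destruct (bit i0 k); [lra|apply pow2_ge_0]. }
  nra.
Qed.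

Lemma norm2_split n re im : norm2 n re im = nrm n re + nrm n im.
Proof. unfold norm2, nrm. apply rsum_plus. Qed.

Lemma energy_decomp n s re im : 0 <= s ->
  energy n (Ham n s) re im = INR n * lam s * norm2 n re im +
    kap s * rsum n (fun k => Sk n s k re + Sk n s k im).
Proof. intros Hs. rewrite energy_split, !E1_decomp, norm2_split, rsum_plus by exact Hs. ring. Qed.

Definition yv n s (j : nat) : R := rr s ^ hw n j * / sqrt ((1 + rr s ^ 2) ^ n).

Lemma yv_norm n s : nrm n (yv n s) = 1.
Proof.
  unfold nrm, yv. assert (Hc : 0 < (1 + rr s ^ 2) ^ n) by (apply pow_lt; nra).
  rewrite (rsum_ext _ _ (fun j => / (1 + rr s ^ 2) ^ n *
        rprod n (fun k => if bit j k then rr s ^ 2 else 1))).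
  - rewrite rsum_scal.
    pose proof (prod_sum n (fun (k : nat) (b : bool) => if b then rr s ^ 2 else 1)) as P.
    cbv beta iota in P. rewrite P.
    rewrite rprod_const.
    field. lra.
  - intros j _. rewrite <- rprod_pow_hw, Rpow_mult_distr, <- pow_mult, Nat.mul_comm, pow_mult.
    rewrite pow_inv, pow2_sqrt by lra. ring.
Qed.

Lemma yv_Sk n s k : (k < n)%nat -> Sk n s k (yv n s) = 0.
Proof.
  intros Hk. unfold Sk. transitivity (rsum (2^n) (fun _ => 0)); [|apply rsum_zero]. apply rsum_ext; intros i Hi.
  destruct (bit i k) eqn:Bi; [reflexivity|]. unfold yv. rewrite hw_add by auto. simpl. ring.
Qed.

Lemma zero_Sk n s k : Sk n s k (fun _ => 0) = 0.
Proof. unfold Sk. transitivity (rsum (2^n) (fun _ => 0)); [|apply rsum_zero]. apply rsum_ext; intros i Hi.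
  destruct (bit i k); simpl; ring. Qed.

Lemma ground_shape n s re im : 0 <= s <= 1 -> IsGroundState n (Ham n s) re im ->
  forall j, (j < 2 ^ n)%nat -> re j = rr s ^ hw n j * re 0%nat /\ im j = rr s ^ hw n j * im 0%nat.
Proof.
  intros Hs [Hn Hmin].
  assert (Hy : norm2 n (yv n s) (fun _ => 0) = 1).
  { rewrite norm2_split, yv_norm. unfold nrm. rewrite (rsum_ext _ _ (fun _ => 0)), rsum_zero by (intros; ring). ring. }
  specialize (Hmin _ _ Hy). rewrite !energy_decomp in Hmin by lra.
  rewrite Hn, Hy in Hmin.
  rewrite (rsum_ext n (fun k => Sk n s k (yv n s) + _) (fun _ => 0)), rsum_zero in Hmin.
  2:{ intros k Hk. rewrite yv_Sk, zero_Sk by auto. ring. }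
  pose proof (kap_pos s (proj1 Hs)).
  set (T := rsum n (fun k => Sk n s k re + Sk n s k im)) in Hmin.
  assert (HT : T <= 0) by nra.
  assert (Hk : forall k, (k < n)%nat -> Sk n s k re <= 0 /\ Sk n s k im <= 0).
  { intros k Hk. pose proof (Sk_nonneg n s k re). pose proof (Sk_nonneg n s k im).
    pose proof (rsum_term_le n (fun k => Sk n s k re + Sk n s k im) k) as X.
    simpl in X. assert (Sk n s k re + Sk n s k im <= T).
    { apply X; auto. intros. pose proof (Sk_nonneg n s i re). pose proof (Sk_nonneg n s i im). lra. }
    lra. }
  intros j Hj. split.
  - apply (shape_from n (rr s) re); auto. intros k i Hk' Hi Bi.
    apply (Sk_zero n s k re); auto. apply Hk; auto.
  - apply (shape_from n (rr s) im); auto. intros k i Hk' Hi Bi.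
    apply (Sk_zero n s k im); auto. apply Hk; auto.
Qed.

Lemma exp_INR_mult m y : exp (INR m * y) = exp y ^ m.
Proof. induction m; [simpl; rewrite Rmult_0_l, exp_0; reflexivity|].
  rewrite S_INR, Rmult_plus_distr_r, Rmult_1_l, exp_plus, IHm. simpl. ring. Qed.

Lemma factor_bound u : 0 <= u <= 1/2 ->
  exp (- (2 * u) * (u + 1/2)) * ((1 + exp (2 * u)) / 2) <= exp (- (2 * u ^ 2 / 3)).
Proof.
  intros Hu.
  set (a := exp u). set (b := exp (- u)).
  assert (Hab : a * b = 1) by (unfold a, b; rewrite <- exp_plus, Rplus_opp_r, exp_0; reflexivity).
  assert (Ha : 1 + u <= a) by apply exp_ineq1_le.
  assert (Hb : 1 + - u <= b) by apply exp_ineq1_le.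
  assert (Hbp : 0 < b) by apply exp_pos.
  assert (E1 : exp (- (2 * u) * (u + 1/2)) = exp (- (2 * u ^ 2)) * b).
  { unfold b. rewrite <- exp_plus. f_equal. field. }
  assert (E2 : exp (2 * u) = a * a).
  { unfold a. rewrite <- exp_plus. f_equal. ring. }
  assert (E3 : exp (- (2 * u ^ 2 / 3)) = exp (- (2 * u ^ 2)) * exp (4 * u ^ 2 / 3)).
  { rewrite <- exp_plus. f_equal. field. }
  rewrite E1, E2, E3.
  assert (Hc : (a + b) / 2 <= 1 + 4 * u ^ 2 / 3).
  { assert (a * (1 - u) <= 1) by nra. assert (b * (1 + u) <= 1) by nra.
    assert (a <= / (1 - u)).
    { apply Rmult_le_reg_r with (1 - u); [lra|]. rewrite Rinv_l by lra. lra. }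
    assert (b <= / (1 + u)).
    { apply Rmult_le_reg_r with (1 + u); [lra|]. rewrite Rinv_l by lra. lra. }
    assert (/ (1 - u) + / (1 + u) <= 2 + 8 * u ^ 2 / 3).
    { replace (/ (1 - u) + / (1 + u)) with (2 / (1 - u ^ 2)) by (field; repeat split; nra).
      apply Rmult_le_reg_r with (1 - u ^ 2); [nra|].
      unfold Rdiv. rewrite Rmult_assoc, Rinv_l by nra. assert (0 <= u^2 <= 1/4) by nra. replace (8 * u ^ 2 * / 3) with (8/3 * u^2) by field. nra. }
    lra. }
  assert (Hd : 1 + 4 * u ^ 2 / 3 <= exp (4 * u ^ 2 / 3)) by apply exp_ineq1_le.
  pose proof (exp_pos (- (2 * u ^ 2))).
  replace (exp (- (2 * u ^ 2)) * b * ((1 + a * a) / 2)) with (exp (- (2 * u ^ 2)) * ((a + b) / 2)).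
  2:{ replace (a + b) with (b + a * (a * b)) by (rewrite Hab; ring). field. }
  apply Rmult_le_compat_l; lra.
Qed.

Definition W n p j := rprod n (fun k => if bit j k then p else 1 - p).

Lemma W_nonneg n p j : 0 <= p <= 1 -> 0 <= W n p j.
Proof. intros. apply rprod_nonneg; intros. destruct (bit j i); lra. Qed.

Lemma tail n p theta : 0 <= p <= 1/2 -> INR n / 2 <= theta ->
  rsum (2 ^ n) (fun j => if Rle_dec theta (INR (hw n j)) then W n p j else 0)
  <= exp (- (2 * (theta - INR n / 2) ^ 2) / (3 * INR n)).
Proof.
  intros Hp Hth.
  destruct (Nat.eq_dec n 0) as [->|Hn0].
  - simpl INR. replace (3 * 0) with 0 by ring. unfold Rdiv. rewrite Rinv_0, Rmult_0_r, exp_0.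
    simpl. rewrite rsum_S, rsum_0. destruct (Rle_dec _ _); unfold W; rewrite ?rprod_0; lra.
  - assert (HN : 0 < INR n) by (apply lt_0_INR; lia).
    destruct (Rlt_dec (INR n) theta) as [Hgt|Hle].
    + rewrite (rsum_ext _ _ (fun _ => 0)), rsum_zero.
      * left; apply exp_pos.
      * intros j _. destruct (Rle_dec _ _) as [H|H]; [|reflexivity].
        pose proof (le_INR _ _ (hw_le n j)). lra.
    + set (N := INR n) in *. set (u := (theta - N / 2) / N).
      assert (Hu : 0 <= u <= 1/2).
      { unfold u. split.
        - apply Rmult_le_pos; [lra|left; apply Rinv_0_lt_compat; lra].
        - apply Rmult_le_reg_r with N; auto. unfold Rdiv. rewrite Rmult_assoc, Rinv_l by lra. lra. }
      assert (Hth' : theta = N * (u + 1/2)) by (unfold u; field; lra).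
      set (t := 2 * u).
      apply Rle_trans with (rsum (2^n) (fun j => exp (- (t * theta)) *
          rprod n (fun k => if bit j k then p * exp t else 1 - p))).
      { apply rsum_le; intros j _.
        assert (Heq : exp (- (t * theta)) * rprod n (fun k => if bit j k then p * exp t else 1 - p)
                      = W n p j * exp (t * (INR (hw n j) - theta))).
        { replace (t * (INR (hw n j) - theta)) with (INR (hw n j) * t + - (t * theta)) by ring.
          rewrite exp_plus, exp_INR_mult, rprod_pow_hw. unfold W.
          rewrite <- Rmult_assoc, <- rprod_mult, Rmult_comm.
          f_equal. apply rprod_ext; intros. destruct (bit j i); ring. }
        rewrite Heq. pose proof (W_nonneg n p j ltac:(lra)) as HW.
        destruct (Rle_dec _ _) as [Hd|Hd].
        - rewrite <- (Rmult_1_r (W n p j)) at 1. apply Rmult_le_compat_l; auto.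
          pose proof (exp_ineq1_le (t * (INR (hw n j) - theta))).
          assert (0 <= t * (INR (hw n j) - theta)) by (apply Rmult_le_pos; unfold t; lra). lra.
        - apply Rmult_le_pos; auto. left; apply exp_pos. }
      rewrite rsum_scal.
      pose proof (prod_sum n (fun (k : nat) (b : bool) => if b then p * exp t else 1 - p)) as P.
      cbv beta iota in P. rewrite P, rprod_const.
      assert (Het : 1 <= exp t) by (pose proof (exp_ineq1_le t); unfold t in *; lra).
      apply Rle_trans with (exp (- (t * theta)) * ((1 + exp t) / 2) ^ n).
      { apply Rmult_le_compat_l; [left; apply exp_pos|]. apply pow_incr. nra. }
      replace (- (t * theta)) with (INR n * (- (2 * u) * (u + 1/2))) by (rewrite Hth'; unfold t, N; ring).
      replace (- (2 * (theta - N / 2) ^ 2) / (3 * N)) with (INR n * (- (2 * u ^ 2 / 3)))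
        by (unfold u, N in *; field; lra).
      rewrite !exp_INR_mult, <- Rpow_mult_distr. apply pow_incr. split.
      * apply Rmult_le_pos; [left; apply exp_pos|]. pose proof (exp_pos t). lra.
      * apply factor_bound; auto.
Qed.

Lemma had_sum n j r x0 (x : nat -> R) :
  (forall i, (i < 2 ^ n)%nat -> x i = r ^ hw n i * x0) ->
  rsum (2 ^ n) (fun i => hadn n j i * x i) =
  x0 * rprod n (fun k => (1 + (if bit j k then -1 else 1) * r) / sqrt 2).
Proof.
  intros Hx.
  rewrite (rsum_ext _ _ (fun i => x0 * rprod n (fun k =>
     (fun (k : nat) (b : bool) => (if bit j k && b then -1 else 1) / sqrt 2 * (if b then r else 1)) k (bit i k)))).
  2:{ intros i Hi. rewrite Hx by exact Hi. rewrite rprod_pow_hw. unfold hadn.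
      rewrite rprod_mult. ring. }
  rewrite rsum_scal.
  pose proof (prod_sum n (fun (k : nat) (b : bool) => (if bit j k && b then -1 else 1) / sqrt 2 * (if b then r else 1))) as P.
  cbv beta in P. rewrite P. f_equal. apply rprod_ext; intros k _.
  assert (sqrt 2 <> 0) by (apply Rgt_not_eq, sqrt_lt_R0; lra).
  destruct (bit j k); simpl; field; auto.
Qed.

Lemma sq_sum_rsum N (x : nat -> R) c : (forall i, (i < N)%nat -> x i = c i) -> True.
Proof. auto. Qed.

Theorem mainTheorem14 (n : nat) (theta s : R) (re im : nat -> R) :
  INR n / 2 <= theta ->
  0 <= s <= 1 ->
  IsGroundState n (Ham n s) re im ->
  rsum (2 ^ n) (fun j =>
    if Rle_dec theta (INR (hw n j))
    then amp2_comp re im j + amp2_had n re im j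
    else 0)
  <= 2 * exp (- (2 * (theta - INR n / 2) ^ 2) / (3 * INR n)).
Proof.
  intros Hth Hs HG.
  pose proof (ground_shape n s re im Hs HG) as Sh.
  destruct HG as [Hn _].
  pose proof (rr_bounds s Hs) as Hr. set (r := rr s) in *.
  set (c := 1 + r ^ 2).
  assert (Hc : 0 < c) by (unfold c; nra).
  set (A0 := re 0%nat ^ 2 + im 0%nat ^ 2).
  assert (HA : A0 * c ^ n = 1).
  { rewrite <- Hn. unfold norm2.
    rewrite (rsum_ext _ _ (fun j => A0 * rprod n (fun k =>
        (fun (k : nat) (b : bool) => if b then r ^ 2 else 1) k (bit j k)))).
    2:{ intros j Hj. destruct (Sh j Hj) as [E1 E2]. rewrite E1, E2.
        rewrite <- rprod_pow_hw. unfold A0.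
        rewrite <- pow_mult, Nat.mul_comm, pow_mult. ring. }
    rewrite rsum_scal.
    pose proof (prod_sum n (fun (k : nat) (b : bool) => if b then r ^ 2 else 1)) as P.
    cbv beta iota in P. rewrite P. f_equal. rewrite <- rprod_const. reflexivity. }
  set (p := r ^ 2 / c).
  set (p' := (1 - r) ^ 2 / (2 * c)).
  assert (Hp : 0 <= p <= 1/2).
  { unfold p, c. split.
    - apply Rmult_le_pos; [nra|left; apply Rinv_0_lt_compat; nra].
    - apply Rmult_le_reg_r with (1 + r ^ 2); [nra|]. unfold Rdiv. rewrite Rmult_assoc, Rinv_l by nra. nra. }
  assert (Hp' : 0 <= p' <= 1/2).
  { unfold p', c. split.
    - apply Rmult_le_pos; [nra|left; apply Rinv_0_lt_compat; nra].
    - apply Rmult_le_reg_r with (2 * (1 + r ^ 2)); [nra|]. unfold Rdiv. rewrite Rmult_assoc, Rinv_l by nra. nra. }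
  assert (HA0 : A0 = rprod n (fun _ => / c)).
  { rewrite rprod_const, pow_inv. apply Rmult_eq_reg_r with (c ^ n).
    - rewrite HA, Rinv_l; auto. apply pow_nonzero; lra.
    - apply pow_nonzero; lra. }
  assert (Hcomp : forall j, (j < 2 ^ n)%nat -> amp2_comp re im j = W n p j).
  { intros j Hj. unfold amp2_comp. destruct (Sh j Hj) as [E1 E2]. rewrite E1, E2.
    replace ((r ^ hw n j * re 0%nat) ^ 2 + (r ^ hw n j * im 0%nat) ^ 2) with ((r ^ 2) ^ hw n j * A0)
      by (unfold A0; rewrite <- pow_mult, Nat.mul_comm, pow_mult; ring).
    rewrite rprod_pow_hw, HA0, <- rprod_mult. unfold W. apply rprod_ext; intros k _.
    unfold p, c in *. destruct (bit j k); field; lra. }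
  assert (Hhad : forall j, (j < 2 ^ n)%nat -> amp2_had n re im j = W n p' j).
  { intros j Hj. unfold amp2_had.
    rewrite (had_sum n j r (re 0%nat) re), (had_sum n j r (im 0%nat) im)
      by (intros i Hi; apply (Sh i Hi)).
    replace ((re 0%nat * rprod n (fun k => (1 + (if bit j k then -1 else 1) * r) / sqrt 2)) ^ 2 +
             (im 0%nat * rprod n (fun k => (1 + (if bit j k then -1 else 1) * r) / sqrt 2)) ^ 2)
      with (A0 * rprod n (fun k => (1 + (if bit j k then -1 else 1) * r) / sqrt 2) ^ 2)
      by (unfold A0; ring).
    rewrite rprod_sq, HA0, <- rprod_mult. unfold W. apply rprod_ext; intros k _.
    assert (H2 : sqrt 2 ^ 2 = 2) by (apply pow2_sqrt; lra).
    assert (Hs2 : sqrt 2 <> 0) by (apply Rgt_not_eq, sqrt_lt_R0; lra).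
    unfold p', c in *. destruct (bit j k).
    - field_simplify; try (rewrite H2; f_equal; ring); repeat split; auto; lra.
    - field_simplify; try (rewrite H2; f_equal; ring); repeat split; auto; lra. }
  rewrite (rsum_ext _ _ (fun j => (if Rle_dec theta (INR (hw n j)) then W n p j else 0) +
                                   (if Rle_dec theta (INR (hw n j)) then W n p' j else 0))).
  2:{ intros j Hj. rewrite Hcomp, Hhad by exact Hj. destruct (Rle_dec _ _); ring. }
  rewrite rsum_plus. pose proof (tail n p theta Hp Hth). pose proof (tail n p' theta Hp' Hth). lra.
Qed.
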